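(* Let $\mathbf{b}\in H_{1,2,2}$ have odd norm. Let $U$ be the set of the twelve residue classes modulo $2H_{1,2,2}$ of the elements $\mathbf{v}_1,\mathbf{v}_2,\mathbf{v}_3,\mathbf{v}_4,\mathbf{v}_3-\mathbf{v}_1,\mathbf{v}_3-\mathbf{v}_2,\mathbf{v}_4-\mathbf{v}_3,\mathbf{v}_4-\mathbf{v}_1,\mathbf{v}_4-\mathbf{v}_2,\mathbf{v}_3-\mathbf{v}_2-\mathbf{v}_1,\mathbf{v}_4-\mathbf{v}_2-\mathbf{v}_1,\mathbf{v}_4+\mathbf{v}_3-\mathbf{v}_2-\mathbf{v}_1$. Then the map $\mathbf{x}\mapsto \mathbf{b}\mathbf{x}$ induces a permutation of $U$, and so does the map $\mathbf{x}\mapsto\mathbf{x}\mathbf{b}$.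
   Context: Let $\mathbf{i},\mathbf{j},\mathbf{k}$ be the standard quaternion units; $\overline{\mathbf{q}}$ is quaternion conjugation and $N(\mathbf{q})=\mathbf{q}\overline{\mathbf{q}}$. $H_{1,2,2}$ is the subring of the quaternions equal to the $\mathbb{Z}$-module generated by $\mathbf{v}_1=1$, $\mathbf{v}_2=\mathbf{i}$, $\mathbf{v}_3=\tfrac12(1+\mathbf{i}+\sqrt2\,\mathbf{j})$, $\mathbf{v}_4=\tfrac12(1+\mathbf{i}+\sqrt2\,\mathbf{k})$. The 24 units (elements of norm 1) of $H_{1,2,2}$ are $\pm$ the twelve elements listed in the claim. *)

(* Defs.v *)
From HB Require Import structures.
From mathcomp Require Import all_boot all_order all_algebra.
Set Implicit Arguments. Unset Strict Implicit. Unset Printing Implicit Defensive.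
Import Order.TTheory GRing.Theory Num.Theory.
Local Open Scope ring_scope.

Section Quat.
Variable R : rcfType.

(* q = q0 + q1 i + q2 j + q3 k *)
Record quat := Quat { q0 : R; q1 : R; q2 : R; q3 : R }.

Definition qadd (x y : quat) :=
  Quat (q0 x + q0 y) (q1 x + q1 y) (q2 x + q2 y) (q3 x + q3 y).
Definition qopp (x : quat) := Quat (- q0 x) (- q1 x) (- q2 x) (- q3 x).
Definition qsub (x y : quat) := qadd x (qopp y).
Definition qscale (r : R) (x : quat) := Quat (r * q0 x) (r * q1 x) (r * q2 x) (r * q3 x).

(* Hamilton product: i^2 = j^2 = k^2 = ijk = -1 *)
Definition qmul (x y : quat) :=
  Quat (q0 x * q0 y - q1 x * q1 y - q2 x * q2 y - q3 x * q3 y)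
       (q0 x * q1 y + q1 x * q0 y + q2 x * q3 y - q3 x * q2 y)
       (q0 x * q2 y - q1 x * q3 y + q2 x * q0 y + q3 x * q1 y)
       (q0 x * q3 y + q1 x * q2 y - q2 x * q1 y + q3 x * q0 y).

Definition qconj (x : quat) := Quat (q0 x) (- q1 x) (- q2 x) (- q3 x).

Definition qN (x : quat) := qmul x (qconj x).

Definition qreal (r : R) := Quat r 0 0 0.

Definition v1 := Quat 1 0 0 0.
Definition v2 := Quat 0 1 0 0.
Definition v3 := Quat (1/2) (1/2) (Num.sqrt 2 / 2) 0.
Definition v4 := Quat (1/2) (1/2) 0 (Num.sqrt 2 / 2).

Definition inH (x : quat) : Prop :=
  exists a b c d : int,
    x = qadd (qadd (qscale a%:~R v1) (qscale b%:~R v2))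
             (qadd (qscale c%:~R v3) (qscale d%:~R v4)).

Definition odd_norm (x : quat) : Prop :=
  exists n : int, odd `|n|%N /\ qN x = qreal n%:~R.

Definition cong2 (x y : quat) : Prop :=
  exists h, inH h /\ qsub x y = qscale 2 h.

Definition Ulist : seq quat :=
  [:: v1; v2; v3; v4; qsub v3 v1; qsub v3 v2; qsub v4 v3; qsub v4 v1;
      qsub v4 v2; qsub (qsub v3 v2) v1; qsub (qsub v4 v2) v1;
      qsub (qsub (qadd v4 v3) v2) v1].

Definition U (i : 'I_12) : quat := nth v1 Ulist i.

Definition induces_perm_U (f : quat -> quat) : Prop :=
  (forall x y, inH x -> inH y -> cong2 x y -> cong2 (f x) (f y)) /\
  (forall i, exists j, cong2 (f (U i)) (U j)) /\
  (forall i j, cong2 (f (U i)) (f (U j)) -> cong2 (U i) (U j)) /\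
  (forall j, exists i, cong2 (f (U i)) (U j)).

End Quat.

(* Main.v *)
Set Warnings "-notation-overridden,-ambiguous-paths".
Require Import Defs.
From mathcomp Require Import all_boot all_order all_algebra ring zify.
Set Implicit Arguments. Unset Strict Implicit. Unset Printing Implicit Defensive.
Import Order.TTheory GRing.Theory Num.Theory.
Local Open Scope ring_scope.

Definition Z4 (T : Type) := (T * T * T * T)%type.

Definition mul4 (T : comNzRingType) (x y : Z4 T) : Z4 T :=
  let: (a, b, c, d) := x in let: (a', b', c', d') := y in
  (a * a' - b * b' - b * c' - c * c' - d * b' - d * c' - d * d',
   a * b' + b * a' + b * d' + c * b' + c * d' - d * c',
   a * c' - b * d' + c * a' + c * c' + d * b' + d * c',
   a * d' + b * c' - c * b' + d * a' + d * c' + d * d').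

Definition nrm4 (T : comNzRingType) (x : Z4 T) : T :=
  let: (a, b, c, d) := x in
  a * a + b * b + (a + b) * (c + d) + c * c + d * d + c * d.

Lemma z2_two : (2%:~R : 'Z_2) = 0. Proof. by apply/eqP. Qed.

Lemma z2_cases (x : 'Z_2) : x = 0 \/ x = 1.
Proof. case: x => [[|[|]]] //= H; [left|right]; exact: val_inj. Qed.

Lemma z2_eq (x y u : int) : x - y = u * 2 -> (x%:~R : 'Z_2) = y%:~R.
Proof.
move=> h; have -> : x = y + u * 2 by rewrite -h addrC subrK.
by rewrite rmorphD rmorphM /= z2_two mulr0 addr0.
Qed.

Lemma z2_0 (x : int) : (x%:~R : 'Z_2) = 0 -> x = (x %/ 2)%Z * 2.
Proof.
move=> H; have hx := divz_eq x 2.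
have h0 : (0 <= (x %% 2)%Z) := modz_ge0 x (isT : (2:int) != 0).
have h1 : ((x %% 2)%Z < 2) := ltz_pmod x (isT : (0:int) < 2).
have : (x %% 2)%Z = 0.
  have [->|e1] : (x %% 2 = 0 \/ x %% 2 = 1)%Z by lia. by [].
  by move: H; rewrite {1}hx rmorphD rmorphM /= z2_two mulr0 add0r e1.
by move=> m0; rewrite {1}hx m0 addr0.
Qed.

Lemma z2_odd (n : int) : odd `|n|%N -> (n%:~R : 'Z_2) = 1.
Proof.
case: (z2_cases (n%:~R)) => // /z2_0 e.
by rewrite e abszM /= oddM andbF.
Qed.

Arguments mul4 {T}.
Arguments nrm4 {T}.

Section Main.
Variable R : rcfType.
Notation s := (Num.sqrt (2 : R)).

Lemma hs : s * s = 2.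
Proof. by rewrite -expr2 sqr_sqrtr // ler0n. Qed.
Lemma hs0 : s != 0.
Proof. by rewrite sqrtr_eq0 -ltNge ltr0n. Qed.

Definition emb (z : Z4 int) : quat R :=
  let: (a, b, c, d) := z in
  Quat (a%:~R + (c%:~R + d%:~R) / 2) (b%:~R + (c%:~R + d%:~R) / 2)
       (c%:~R * s / 2) (d%:~R * s / 2).

Lemma emb_mul z w : qmul (emb z) (emb w) = emb (mul4 z w).
Proof.
case: z => [[[a b] c] d]; case: w => [[[a' b'] c'] d'].
rewrite /qmul /emb /=; congr Quat; by field: hs.
Qed.

Lemma emb_norm z : q0 (qN (emb z)) = (nrm4 z)%:~R.
Proof.
case: z => [[[a b] c] d]; rewrite /qN /qmul /qconj /emb /=; by field: hs.
Qed.



Lemma fc (t : R) : t = t * s / 2 * 2 / s.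
Proof. field. exact: hs0. Qed.

Lemma unscale (t u : R) : t * s / 2 = u * s / 2 -> t = u.
Proof. by move=> H; rewrite (fc t) (fc u) H. Qed.

Lemma emb_inj : injective emb.
Proof.
case=> [[[a b] c] d] [[[a' b'] c'] d'] [H1 H2 H3 H4].
have ec : c = c' by apply: (@intr_inj R); apply: unscale.
have ed : d = d' by apply: (@intr_inj R); apply: unscale.
subst c' d'.
by move: H1 H2 => /addIr /intr_inj -> /addIr /intr_inj ->.
Qed.

Definition sub4 (x y : Z4 int) : Z4 int :=
  let: (a, b, c, d) := x in let: (a', b', c', d') := y in
  (a - a', b - b', c - c', d - d').
Definition dbl4 (x : Z4 int) : Z4 int :=
  let: (a, b, c, d) := x in (a * 2, b * 2, c * 2, d * 2).

Lemma emb_sub z w : qsub (emb z) (emb w) = emb (sub4 z w).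
Proof.
case: z => [[[a b] c] d]; case: w => [[[a' b'] c'] d'].
rewrite /qsub /qadd /qopp /emb /=; congr Quat; by field.
Qed.

Lemma emb_dbl z : qscale 2 (emb z) = emb (dbl4 z).
Proof.
case: z => [[[a b] c] d].
rewrite /qscale /emb /=; congr Quat; by field.
Qed.

Lemma inH_emb x : inH x <-> exists z, x = emb z.
Proof.
split.
  move=> [a [b [c [d ->]]]]; exists (a, b, c, d).
  rewrite /qadd /qscale /v1 /v2 /v3 /v4 /emb /=; congr Quat; by field.
move=> [[[[a b] c] d] ->]; exists a, b, c, d.
rewrite /qadd /qscale /v1 /v2 /v3 /v4 /emb /=; congr Quat; by field.
Qed.

Definition uz : seq (Z4 int) :=
  [:: (1, 0, 0, 0); (0, 1, 0, 0); (0, 0, 1, 0); (0, 0, 0, 1);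
      (-1, 0, 1, 0); (0, -1, 1, 0); (0, 0, -1, 1); (-1, 0, 0, 1);
      (0, -1, 0, 1); (-1, -1, 1, 0); (-1, -1, 0, 1); (-1, -1, 1, 1)].

Lemma Ulist_emb : Ulist R = map emb uz.
Proof.
rewrite /Ulist /uz /=.
congr [:: _; _; _; _; _; _; _; _; _; _; _; _];
  rewrite /qsub /qadd /qopp /v1 /v2 /v3 /v4 /emb /=; congr Quat; by field.
Qed.


Definition m2 (z : Z4 int) : Z4 'Z_2 :=
  let: (a, b, c, d) := z in (a%:~R, b%:~R, c%:~R, d%:~R).

Lemma cong2_emb z w : cong2 (emb z) (emb w) <-> m2 z = m2 w.
Proof.
split.
  move=> [h [/inH_emb [u ->] E]]; move: E; rewrite emb_sub emb_dbl => /emb_inj.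
  case: z => [[[a b] c] d]; case: w => [[[a' b'] c'] d']; case: u => [[[x y] z] t].
  by move=> /= [/z2_eq -> /z2_eq -> /z2_eq -> /z2_eq ->].
case: z => [[[a b] c] d]; case: w => [[[a' b'] c'] d'] E.
have [e1 e2 e3 e4] := E.
have f (x y : int) : (x%:~R : 'Z_2) = y%:~R -> x - y = ((x - y) %/ 2)%Z * 2.
  by move=> exy; apply: z2_0; rewrite rmorphB /= exy subrr.
exists (emb (((a - a') %/ 2)%Z, ((b - b') %/ 2)%Z, ((c - c') %/ 2)%Z, ((d - d') %/ 2)%Z)).
split; first by apply/inH_emb; eexists.
by rewrite emb_sub emb_dbl /= -(f _ _ e1) -(f _ _ e2) -(f _ _ e3) -(f _ _ e4).
Qed.

End Main.

Lemma m2_mul z w : m2 (mul4 z w) = mul4 (m2 z) (m2 w).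
Proof.
case: z => [[[a b] c] d]; case: w => [[[a' b'] c'] d'].
by rewrite /= !(rmorphB, rmorphD, rmorphM).
Qed.

Lemma m2_nrm z : (nrm4 z)%:~R = nrm4 (m2 z).
Proof.
case: z => [[[a b] c] d].
by rewrite /= !(rmorphB, rmorphD, rmorphM).
Qed.

Definition z0 : Z4 int := (1, 0, 0, 0).

Definition checkG (g : Z4 'Z_2 -> Z4 'Z_2) : bool :=
  let u := map m2 uz in
  let n i := nth (m2 z0) u i in
  [&& all (fun i => has (fun j => g (n i) == n j) (iota 0 12)) (iota 0 12),
      all (fun i => all (fun j => (g (n i) == g (n j)) ==> (n i == n j)) (iota 0 12)) (iota 0 12)
    & all (fun j => has (fun i => g (n i) == n j) (iota 0 12)) (iota 0 12)].

Lemma fin (P : Z4 'Z_2) : nrm4 P = 1 -> checkG (mul4 P) && checkG (mul4^~ P).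
Proof.
case: P => [[[a b] c] d].
case: (z2_cases a) => ->; case: (z2_cases b) => ->;
case: (z2_cases c) => ->; case: (z2_cases d) => -> /eqP; by [].
Qed.

Lemma mem_iota_ord (i : 'I_12) : (i : nat) \in iota 0 12.
Proof. by rewrite mem_iota add0n ltn_ord. Qed.

Lemma size_uz : size uz = 12%N.
Proof. by []. Qed.

Arguments cong2_emb {R z w}.

Section Glue.
Variable R : rcfType.

Lemma U_emb (i : 'I_12) : U R i = emb R (nth z0 uz i).
Proof.
by rewrite /U Ulist_emb (nth_map z0) // size_uz.
Qed.

Lemma nth_m2 (i : nat) : (i < 12)%N -> nth (m2 z0) (map m2 uz) i = m2 (nth z0 uz i).
Proof. by move=> hi; rewrite (nth_map z0). Qed.

Lemma perm_of (f : quat R -> quat R) (g : Z4 int -> Z4 int) (g2 : Z4 'Z_2 -> Z4 'Z_2) :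
  (forall z, f (emb R z) = emb R (g z)) -> (forall z, m2 (g z) = g2 (m2 z)) ->
  checkG g2 -> induces_perm_U f.
Proof.
move=> Hf Hg /and3P [c1 c2 c3].
split; [|split; [|split]].
- move=> x y /inH_emb [zx ->] /inH_emb [zy ->] /cong2_emb E.
  by rewrite !Hf; apply/cong2_emb; rewrite !Hg E.
- move=> i; have /hasP [j] := allP c1 i (mem_iota_ord i).
  rewrite mem_iota add0n => hj /eqP E.
  exists (Ordinal hj); rewrite !U_emb Hf; apply/cong2_emb.
  by rewrite Hg -!nth_m2.
- move=> i j; rewrite !U_emb !Hf => /cong2_emb; rewrite !Hg -!nth_m2 // => E.
  apply/cong2_emb; rewrite -!nth_m2 //; apply/eqP.
  by move: (allP (allP c2 i (mem_iota_ord i)) j (mem_iota_ord j)) => /implyP; apply; apply/eqP.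
- move=> j; have /hasP [i] := allP c3 j (mem_iota_ord j).
  rewrite mem_iota add0n => hi /eqP E.
  exists (Ordinal hi); rewrite !U_emb Hf; apply/cong2_emb.
  by rewrite Hg -!nth_m2.
Qed.

End Glue.

Theorem lemma8 (R : rcfType) (b : quat R) :
  inH b -> odd_norm b ->
  induces_perm_U (fun x => qmul b x) /\ induces_perm_U (fun x => qmul x b).
Proof.
move=> /inH_emb [zb ->] [n [hn hN]].
have hP : nrm4 (m2 zb) = 1.
  rewrite -m2_nrm.
  have : q0 (qN (emb R zb)) = n%:~R by rewrite hN.
  by rewrite emb_norm => /intr_inj ->; apply: z2_odd.
have /andP [cL cR] := fin hP.
split.
- apply: (perm_of (g := mul4 zb)) cL => z; first by rewrite emb_mul.
  by rewrite m2_mul.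
- apply: (perm_of (g := mul4^~ zb)) cR => z; first by rewrite emb_mul.
  by rewrite m2_mul.
Qed.
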